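(* Let $\mathcal{M}$ be a Riemannian submanifold of a Euclidean space $\mathcal{E}$ (with induced norm $\|\cdot\|_{\mathcal{M}}$) and let $f:\mathcal{M}\times\mathbb{R}^n\to\mathbb{R}$ be differentiable. Let $\operatorname{Retr}_{\mathcal{M}}$ be a retraction on $\mathcal{M}$ and assume: (i) there is $L_y\ge0$ with $\|\nabla_yf(\boldsymbol{x},\boldsymbol{y}^1)-\nabla_yf(\boldsymbol{x},\boldsymbol{y}^2)\|\le L_y\|\boldsymbol{y}^1-\boldsymbol{y}^2\|$ for all $\boldsymbol{x}\in\mathcal{M}$, $\boldsymbol{y}^1,\boldsymbol{y}^2\in\mathbb{R}^n$; (ii) there is $L_x\ge1$ such that for all $\boldsymbol{y}$, $f(\cdot,\boldsymbol{y})$ has a gradient Lipschitz retraction with constant $L_x$ with respect to $\operatorname{Retr}_{\mathcal{M}}$, i.e. $f(\operatorname{Retr}_{\mathcal{M}}(\boldsymbol{x},\boldsymbol{v}),\boldsymbol{y})\le f(\boldsymbol{x},\boldsymbol{y})+\langle\operatorname{grad}_xf(\boldsymbol{x},\boldsymbol{y}),\boldsymbol{v}\rangle_{\boldsymbol{x}}+\frac{L_x}{2}\|\boldsymbol{v}\|_{\boldsymbol{x}}^2$ for all $\boldsymbol{x}\in\mathcal{M}$, $\boldsymbol{v}\in T_{\boldsymbol{x}}\mathcal{M}$; (iii) there is $L_{xy}\ge0$ with $\|\nabla_yf(\boldsymbol{x}^1,\boldsymbol{y})-\nabla_yf(\boldsymbol{x}^2,\boldsymbol{y})\|\le L_{xy}\|\boldsymbol{x}^1-\boldsymbol{x}^2\|_{\mathcal{M}}$;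 (iv) the injectivity radius of $\mathcal{M}$ is strictly positive and there is $L_1>0$ with $\|\operatorname{Retr}_{\mathcal{M}}(\boldsymbol{x},\boldsymbol{v})-\boldsymbol{x}\|_{\mathcal{M}}\le L_1\|\boldsymbol{v}\|_{\boldsymbol{x}}$ for all $\boldsymbol{x}\in\mathcal{M}$, $\boldsymbol{v}\in T_{\boldsymbol{x}}\mathcal{M}$. Define $\bar f:\mathcal{M}'=\mathcal{M}\times\mathbb{R}^n\to\mathbb{R}$ by $\bar f(\boldsymbol{x},\boldsymbol{y})=f(\boldsymbol{x},\boldsymbol{y})$ and the retraction $\operatorname{Retr}_{\mathcal{M}'}((\boldsymbol{x},\boldsymbol{y}),(\eta_x,\eta_y))=(\operatorname{Retr}_{\mathcal{M}}(\boldsymbol{x},\eta_x),\boldsymbol{y}+\eta_y)$. Then $\bar f$ has a gradient Lipschitz retraction with respect to $\operatorname{Retr}_{\mathcal{M}'}$ with constant $L_R=L_{xy}L_1+\max(L_x,L_y)$, i.e. for all $\boldsymbol{z}\in\mathcal{M}'$ and $\eta\in T_{\boldsymbol{z}}\mathcal{M}'$, $$\bar f(\operatorname{Retr}_{\mathcal{M}'}(\boldsymbol{z},\eta))\le\bar f(\boldsymbol{z})+\langle\operatorname{grad}\bar f(\boldsymbol{z}),\eta\rangle_{\boldsymbol{z}}+\frac{L_R}{2}\|\eta\|_{\boldsymbol{z}}^2.$$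
   Context: $\operatorname{grad}$ denotes the Riemannian gradient, $\nabla_y$ the Euclidean gradient in $\boldsymbol{y}$; $\mathcal{M}'$ carries the product metric $\langle(\eta_x,\eta_y),(\xi_x,\xi_y)\rangle_{\boldsymbol{z}}=\langle\eta_x,\xi_x\rangle_{\boldsymbol{x}}+\eta_y^\top\xi_y$. A retraction is a smooth map $\operatorname{Retr}:T\mathcal{M}\to\mathcal{M}$ with $\operatorname{Retr}(\boldsymbol{x},\boldsymbol{0})=\boldsymbol{x}$ and $D\operatorname{Retr}(\boldsymbol{x},\cdot)(\boldsymbol{0})=\mathrm{id}$. *)

(* Defs.v *)
From HB Require Import structures.
From mathcomp Require Import all_boot all_order all_algebra.
From mathcomp Require Import all_classical all_reals all_analysis.
Set Implicit Arguments. Unset Strict Implicit. Unset Printing Implicit Defensive.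
Import Order.TTheory GRing.Theory Num.Theory.
Import numFieldNormedType.Exports.
Local Open Scope classical_set_scope.
Local Open Scope ring_scope.

Definition dot {R : realType} {k : nat} (u v : 'rV[R]_k) : R := (u *m v^T) 0 0.
Definition enorm {R : realType} {k : nat} (v : 'rV[R]_k) : R := Num.sqrt (dot v v).

Definition tangent {R : realType} {k : nat} (S : set 'rV[R]_k) (x : 'rV[R]_k)
  : set 'rV[R]_k :=
  [set v | exists gam : R -> 'rV[R]_k,
      (forall t, S (gam t)) /\ gam 0 = x /\ derivable gam 0 1 /\
      derive1 gam 0 = v].

(* g is the Riemannian gradient at x (w.r.t. the metric induced by the
   Euclidean inner product) of F : S -> R, where S is a subset of R^k:
   g is tangent at x, and along every differentiable curve gam in S through x,
   (F o gam)'(0) = <g, gam'(0)>.  For S = setT this is the Euclidean gradient. *)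
Definition is_rgrad {R : realType} {k : nat} (S : set 'rV[R]_k)
  (F : 'rV[R]_k -> R) (x g : 'rV[R]_k) : Prop :=
  S x /\ tangent S x g /\
  forall gam : R -> 'rV[R]_k,
    (forall t, S (gam t)) -> gam 0 = x -> derivable gam 0 1 ->
    derivable (F \o gam) 0 1 /\ derive1 (F \o gam) 0 = dot g (derive1 gam 0).

(* M' = M x R^n, viewed inside R^(d+n) via z = row_mx x y; the Euclidean inner
   product on R^(d+n) is exactly the product metric. *)
Definition prodM {R : realType} {d n : nat} (M : set 'rV[R]_d) : set 'rV[R]_(d + n) :=
  [set z | M (lsubmx z)].

Definition fbar {R : realType} {d n : nat} (f : 'rV[R]_d -> 'rV[R]_n -> R)
  (z : 'rV[R]_(d + n)) : R := f (lsubmx z) (rsubmx z).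

Definition retrM' {R : realType} {d n : nat} (Retr : 'rV[R]_d -> 'rV[R]_d -> 'rV[R]_d)
  (z eta : 'rV[R]_(d + n)) : 'rV[R]_(d + n) :=
  row_mx (Retr (lsubmx z) (lsubmx eta)) (rsubmx z + rsubmx eta).

Definition is_retraction {R : realType} {d : nat} (M : set 'rV[R]_d)
  (Retr : 'rV[R]_d -> 'rV[R]_d -> 'rV[R]_d) : Prop :=
  forall x v, M x -> tangent M x v ->
    M (Retr x v) /\ Retr x 0 = x /\
    derivable (fun t : R => Retr x (t *: v)) 0 1 /\
    derive1 (fun t : R => Retr x (t *: v)) 0 = v.

(* Main.v *)
Require Import Defs.
From HB Require Import structures.
From mathcomp Require Import all_boot all_order all_algebra.
From mathcomp Require Import all_classical all_reals all_analysis.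
From mathcomp Require Import ring lra.
Import Order.TTheory GRing.Theory Num.Theory.
Import numFieldNormedType.Exports.
Local Open Scope classical_set_scope.
Local Open Scope ring_scope.


Section Dot.
Variable R : realType.

Lemma dotE k (u v : 'rV[R]_k) : dot u v = \sum_i u 0 i * v 0 i.
Proof. by rewrite /dot !mxE; apply: eq_bigr => i _; rewrite mxE. Qed.

Lemma dotC k (u v : 'rV[R]_k) : dot u v = dot v u.
Proof. by rewrite !dotE; apply: eq_bigr => i _; rewrite mulrC. Qed.

Lemma dotBl k (u v w : 'rV[R]_k) : dot (u - v) w = dot u w - dot v w.
Proof. by rewrite !dotE -sumrB; apply: eq_bigr => i _; rewrite !mxE mulrBl. Qed.

Lemma dot_ge0 k (u : 'rV[R]_k) : 0 <= dot u u.
Proof. by rewrite dotE; apply: sumr_ge0 => i _; rewrite -expr2 sqr_ge0. Qed.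

Lemma enorm_ge0 k (u : 'rV[R]_k) : 0 <= enorm u.
Proof. exact: sqrtr_ge0. Qed.

Lemma enorm_sq k (u : 'rV[R]_k) : enorm u ^+ 2 = dot u u.
Proof. by rewrite /enorm sqr_sqrtr // dot_ge0. Qed.

Lemma dot_row k1 k2 (a c : 'rV[R]_k1) (b e : 'rV[R]_k2) :
  dot (row_mx a b) (row_mx c e) = dot a c + dot b e.
Proof. by rewrite /dot tr_row_mx mul_row_col mxE. Qed.

Lemma dot_split k1 k2 (u v : 'rV[R]_(k1 + k2)) :
  dot u v = dot (lsubmx u) (lsubmx v) + dot (rsubmx u) (rsubmx v).
Proof. by rewrite -dot_row !hsubmxK. Qed.

Lemma dotZ k (t : R) (u v : 'rV[R]_k) : dot (t *: u) v = t * dot u v.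
Proof. by rewrite !dotE mulr_sumr; apply: eq_bigr => i _; rewrite !mxE mulrA. Qed.

Lemma cauchy_schwarz k (u v : 'rV[R]_k) : dot u v <= enorm u * enorm v.
Proof.
set A := dot u u; set C := dot v v; set B := dot u v.
have A0 : 0 <= A by apply: dot_ge0.
have C0 : 0 <= C by apply: dot_ge0.
set a := enorm u; set c := enorm v.
have a0 : 0 <= a by apply: enorm_ge0.
have c0 : 0 <= c by apply: enorm_ge0.
have aA : a ^+ 2 = A by apply: enorm_sq.
have cC : c ^+ 2 = C by apply: enorm_sq.
have key : 0 <= c ^+ 2 * A - 2 * (c * a) * B + a ^+ 2 * C.
  have -> : c ^+ 2 * A - 2 * (c * a) * B + a ^+ 2 * C =
     dot (c *: u - a *: v) (c *: u - a *: v).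
    rewrite /A /B /C !dotE !mulr_sumr -sumrB -big_split; apply: eq_bigr => i _.
    rewrite !mxE /=; ring.
  exact: dot_ge0.
have zero : forall w : 'rV[R]_k, dot w w = 0 -> forall z, dot w z = 0.
  move=> w /eqP; rewrite dotE psumr_eq0; last by move=> i _; rewrite -expr2 sqr_ge0.
  move=> /allP H z; rewrite dotE big1 // => i _.
  have /implyP := H i (mem_index_enum _); rewrite mulf_eq0 orbb => /(_ isT) /eqP ->.
  by rewrite mul0r.
have [ha|ha] := eqVneq a 0.
  have : A = 0 by rewrite -aA ha expr0n.
  by move=> /zero; rewrite /B => ->; rewrite ha mul0r.
have [hc|hc] := eqVneq c 0.
  have : C = 0 by rewrite -cC hc expr0n.
  by move=> /zero; rewrite /B dotC => ->; rewrite hc mulr0.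
have ap : 0 < a by rewrite lt_def ha.
have cp : 0 < c by rewrite lt_def hc.
rewrite -aA -cC in key.
have acp : 0 < a * c by apply: mulr_gt0.
nra.
Qed.
End Dot.


Section Der.
Variable R : realType.

Lemma lin_comp (U W : normedModType R) (L : {linear U -> W}) (gam : R -> U) (t : R) (c : W) :
  continuous L -> derivable gam t 1 ->
  derivable (fun s => L (gam s) + c) t 1 /\
  derive1 (fun s => L (gam s) + c) t = L (derive1 gam t).
Proof.
move=> cL dg.
have dg' : differentiable gam t by apply/derivable1_diffP.
have dLg : differentiable (L \o gam) t.
  by apply: differentiable_comp => //; apply: linear_differentiable.
have dLg1 : derivable (L \o gam) t 1 by apply/derivable1_diffP.
have -> : (fun s => L (gam s) + c) = (L \o gam) + cst c by [].
split; first exact: derivableD.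
rewrite derive1E deriveD //.
rewrite derive_cst addr0 -derive1E derive1E' //.
rewrite diff_comp //; last by apply: linear_differentiable.
rewrite diff_lin // deriv1E //= scale1r //.
Qed.

Lemma line_der (V W : normedModType R) (F : V -> W) (x v : V) :
  derivable F x v ->
  derivable (fun h : R => F (h *: v + x)) 0 1 /\
  derive1 (fun h : R => F (h *: v + x)) 0 = 'D_v F x.
Proof.
move=> dF; split; first exact: (proj1 (derivable1P F x v) dF).
rewrite /derive1 /derive.
have -> : (fun h : R => h^-1 *: (F ((h + 0) *: v + x) - F (0 *: v + x))) =
  (fun h => h^-1 *: ((F \o shift x) (h *: v) - F x)).
  by apply: funext => h /=; rewrite addr0 scale0r add0r.
by [].
Qed.

Lemma line_der_id (V : normedModType R) (x v : V) :
  derivable (fun h : R => h *: v + x) 0 1 /\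
  derive1 (fun h : R => h *: v + x) 0 = v.
Proof.
have [H1 H2] := @line_der V V id x v (@derivable_id R V x v).
split; first exact: H1.
rewrite H2; exact: derive_id.
Qed.

Lemma shift_der (h : R -> R) (t : R) :
  derivable (fun s => h (s + t)) 0 1 ->
  derivable h t 1 /\ derive1 h t = derive1 (fun s => h (s + t)) 0.
Proof.
move=> dh; split.
  have E : (fun s => h (s + t)) = (fun s : R => h (s *: 1 + t)).
    by apply: funext => s; rewrite [s *: 1]mulr1.
  rewrite E in dh; exact: (proj2 (derivable1P h t 1) dh).
rewrite /derive1.
have -> : (fun s : R => s^-1 *: (h (s + 0 + t) - h (0 + t))) =
  (fun s => s^-1 *: (h (s + t) - h t)).
  by apply: funext => s /=; rewrite addr0 add0r.
by [].
Qed.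

End Der.


Section Q.
Variable R : realType.

Lemma quad_der (D K t : R) :
  derivable (fun s : R => s * D + s ^+ 2 * K) t 1 /\
  derive1 (fun s : R => s * D + s ^+ 2 * K) t = D + 2 * t * K.
Proof.
have d1 : derivable (fun s : R => s * D) t 1.
  by apply: derivableM => //; apply: derivable_id.
have d2 : derivable (fun s : R => s ^+ 2 * K) t 1.
  by apply: derivableM => //; apply: exprn_derivable.
have -> : (fun s : R => s * D + s ^+ 2 * K) =
  (fun s : R => s * D) + (fun s : R => s ^+ 2 * K) by [].
split; first exact: derivableD.
rewrite derive1E deriveD // -!derive1E.
rewrite (derive1Mr (f := id)); last exact: derivable_id.
rewrite (derive1Mr (f := @GRing.exp R ^~ 2)); last exact: exprn_derivable.
rewrite exp_derive1.
have -> : (id : R -> R)^`()%classic t = 1.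
  by rewrite derive1E derive_id.
rewrite /GRing.scale /=. ring.
Qed.

End Q.


Definition rowl (R : realType) (d n : nat) (A : 'rV[R]_d) : 'rV[R]_(d + n) := row_mx A 0.
Definition rowr (R : realType) (d n : nat) (A : 'rV[R]_n) : 'rV[R]_(d + n) := row_mx 0 A.

Lemma rowl_linear (R : realType) (d n : nat) : linear (@rowl R d n).
Proof. by move=> a u v; rewrite /rowl scale_row_mx add_row_mx scaler0 addr0. Qed.
Lemma rowr_linear (R : realType) (d n : nat) : linear (@rowr R d n).
Proof. by move=> a u v; rewrite /rowr scale_row_mx add_row_mx scaler0 addr0. Qed.

HB.instance Definition _ (R : realType) (d n : nat) :=
  GRing.isLinear.Build R _ _ _ (@rowl R d n) (@rowl_linear R d n).
HB.instance Definition _ (R : realType) (d n : nat) :=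
  GRing.isLinear.Build R _ _ _ (@rowr R d n) (@rowr_linear R d n).

Lemma rowl_cont (R : realType) (d n : nat) : continuous (@rowl R d n).
Proof.
move=> u A /nbhs_ballP[e /= e0 eA].
apply/nbhs_ballP; exists e => //= v [_ uv]; apply: eA; split => // i j.
rewrite /rowl !mxE; case: splitP => k _; first exact: uv.
by rewrite !mxE; apply: ballxx.
Qed.

Lemma rowr_cont (R : realType) (d n : nat) : continuous (@rowr R d n).
Proof.
move=> u A /nbhs_ballP[e /= e0 eA].
apply/nbhs_ballP; exists e => //= v [_ uv]; apply: eA; split => // i j.
rewrite /rowr !mxE; case: splitP => k _; last exact: uv.
by rewrite !mxE; apply: ballxx.
Qed.

Section Geo.
Variables (R : realType) (d n : nat) (M : set 'rV[R]_d) (f : 'rV[R]_d -> 'rV[R]_n -> R).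

Lemma tangent_l (z e : 'rV[R]_(d + n)) :
  tangent (prodM M) z e -> tangent M (lsubmx z) (lsubmx e).
Proof.
move=> [gam [Hg [g0 [dg Dg]]]].
have [H1 H2] := @lin_comp R _ _ (lsubmx : {linear 'rV[R]_(d + n) -> 'rV[R]_d}) gam 0 0
  (@continuous_lsubmx R 1 d n) dg.
exists (fun s => lsubmx (gam s) + 0); split; first by move=> t; rewrite addr0; apply: Hg.
split; first by rewrite g0 addr0.
by split => //; rewrite H2 Dg.
Qed.

Lemma dot0r k (u : 'rV[R]_k) : dot u 0 = 0.
Proof. by rewrite dotE big1 // => i _; rewrite mxE mulr0. Qed.

Lemma rgrad_x (z g : 'rV[R]_(d + n)) :
  is_rgrad (prodM M) (fbar f) z g ->
  is_rgrad M (fun x' => f x' (rsubmx z)) (lsubmx z) (lsubmx g).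
Proof.
move=> [Mz [Tg Hg]]; split => //; split; first exact: tangent_l.
move=> gam Hgam g0 dg.
have [H1 H2] := @lin_comp R _ _ (@rowl R d n) gam 0 (@rowr R d n (rsubmx z))
  (@rowl_cont R d n) dg.
set del := fun s => _ in H1 H2.
have Edel : forall s, del s = row_mx (gam s) (rsubmx z).
  by move=> s; rewrite /del /rowl /rowr add_row_mx addr0 add0r.
have P1 : forall t, prodM M (del t).
  by move=> t; rewrite /prodM /= Edel row_mxKl.
have P2 : del 0 = z by rewrite Edel g0 hsubmxK.
have [K1 K2] := Hg del P1 P2 H1.
have -> : (fun x' => f x' (rsubmx z)) \o gam = fbar f \o del.
  by apply: funext => s; rewrite /fbar /= Edel row_mxKl row_mxKr.
split => //; rewrite K2 H2 dot_split /rowl row_mxKl row_mxKr dot0r addr0 //.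
Qed.

Lemma rgrad_y (z g : 'rV[R]_(d + n)) :
  is_rgrad (prodM M) (fbar f) z g ->
  is_rgrad setT (f (lsubmx z)) (rsubmx z) (rsubmx g).
Proof.
move=> [Mz [Tg Hg]]; split => //; split.
  have [H1 H2] := @line_der_id R _ (rsubmx z) (rsubmx g).
  exists (fun h : R => h *: rsubmx g + rsubmx z); split => //.
  by split; [rewrite scale0r add0r|split].
move=> gam Hgam g0 dg.
have [H1 H2] := @lin_comp R _ _ (@rowr R d n) gam 0 (@rowl R d n (lsubmx z))
  (@rowr_cont R d n) dg.
set del := fun s => _ in H1 H2.
have Edel : forall s, del s = row_mx (lsubmx z) (gam s).
  by move=> s; rewrite /del /rowl /rowr add_row_mx addr0 add0r.
have P1 : forall t, prodM M (del t).
  by move=> t; rewrite /prodM /= Edel row_mxKl.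
have P2 : del 0 = z by rewrite Edel g0 hsubmxK.
have [K1 K2] := Hg del P1 P2 H1.
have -> : f (lsubmx z) \o gam = fbar f \o del.
  by apply: funext => s; rewrite /fbar /= Edel row_mxKl row_mxKr.
split => //; rewrite K2 H2 dot_split /rowr row_mxKl row_mxKr dot0r add0r //.
Qed.

End Geo.

Lemma enormZ (R : realType) k (t : R) (u : 'rV[R]_k) : enorm (t *: u) = `|t| * enorm u.
Proof.
rewrite /enorm dotZ dotC dotZ mulrA -expr2 sqrtrM ?sqr_ge0 //.
by rewrite sqrtr_sqr.
Qed.


Lemma descent_y (R : realType) n (F : 'rV[R]_n -> R) (Ly : R) (y b G0 : 'rV[R]_n) :
  0 <= Ly ->
  (forall w, exists G, is_rgrad setT F w G) ->
  (forall y1 y2 g1 g2, is_rgrad setT F y1 g1 -> is_rgrad setT F y2 g2 ->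
     enorm (g1 - g2) <= Ly * enorm (y1 - y2)) ->
  is_rgrad setT F y G0 ->
  F (y + b) <= F y + dot G0 b + Ly / 2 * enorm b ^+ 2.
Proof.
move=> Ly0 Gex Lip HG0.
pose h := fun t : R => F (t *: b + y).
have hder : forall t, exists G, is_rgrad setT F (t *: b + y) G /\
    derivable h t 1 /\ derive1 h t = dot G b.
  move=> t; have [G HG] := Gex (t *: b + y); exists G; split => //.
  have [L1 L2] := @line_der_id R _ (t *: b + y) b.
  have [_ [_ HG3]] := HG.
  have e0 : (fun h0 : R => h0 *: b + (t *: b + y)) 0 = t *: b + y.
    by rewrite /= scale0r add0r.
  have [K1 K2] := HG3 _ (fun _ => I) e0 L1.
  have E : F \o (fun h0 : R => h0 *: b + (t *: b + y)) = (fun s => h (s + t)).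
    by apply: funext => s; rewrite /h /= scalerDl addrA.
  rewrite E in K1 K2.
  have [S1 S2] := @shift_der R h t K1.
  by split => //; rewrite S2 K2 L2.
set D0 := dot G0 b.
set K := Ly / 2 * enorm b ^+ 2.
pose phi := fun t : R => h t - (t * D0 + t ^+ 2 * K).
have phider : forall t, derivable phi t 1 /\
    (0 <= t -> derive1 phi t <= 0).
  move=> t; have [G [HG [dh Dh]]] := hder t.
  have [q1 q2] := @quad_der R D0 K t.
  have -> : phi = h - (fun t : R => t * D0 + t ^+ 2 * K) by [].
  split; first exact: derivableB.
  move=> t0; rewrite derive1E deriveB // -!derive1E Dh q2.
  have := Lip _ _ _ _ HG HG0.
  have -> : t *: b + y - y = t *: b by rewrite addrK.
  rewrite enormZ ger0_norm //.
  have := @cauchy_schwarz R _ (G - G0) b; rewrite dotBl.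
  rewrite /D0 /K => H1 H2.
  have nb := @enorm_ge0 R _ b.
  have : dot G b - dot G0 b <= Ly * (t * enorm b) * enorm b.
    apply: le_trans H1 _; apply: ler_wpM2r => //.
  move=> H3. rewrite expr2. nra.
have cphi : {within `[0, 1], continuous phi}.
  apply: derivable_within_continuous => t _; exact: (phider t).1.
have D1 : forall x : R, x \in `]0, 1[ -> derivable phi x 1.
  move=> t _; exact: (phider t).1.
have D2 : forall x : R, x \in `]0, 1[ -> phi^`()%classic x <= 0.
  move=> t; rewrite in_itv /= => /andP[t0 _]; apply: (phider t).2; exact: ltW.
have I0 : (0:R) \in `[0, 1] by rewrite in_itv /= lexx ler01.
have I1 : (1:R) \in `[0, 1] by rewrite in_itv /= lexx ler01.
have := @ler0_derive1_le_cc R phi 0 1 D1 D2 cphi 1 0 I1 I0 ler01.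
rewrite /phi /h !scale0r !scale1r add0r mul0r mul1r expr0n /= mul0r addr0 subr0 expr1n mul1r.
move=> H; rewrite addrC; lra.
Qed.


Theorem lemma7 (R : realType) (d n : nat) (M : set 'rV[R]_d)
  (f : 'rV[R]_d -> 'rV[R]_n -> R) (Retr : 'rV[R]_d -> 'rV[R]_d -> 'rV[R]_d)
  (Ly Lx Lxy L1 : R) :
  (* f differentiable on M x R^n *)
  (forall z : 'rV[R]_(d + n), prodM M z ->
     exists g, is_rgrad (prodM M) (fbar f) z g) ->
  is_retraction M Retr ->
  (* (i) *)
  0 <= Ly ->
  (forall x y1 y2 g1 g2, M x ->
     is_rgrad setT (f x) y1 g1 -> is_rgrad setT (f x) y2 g2 ->
     enorm (g1 - g2) <= Ly * enorm (y1 - y2)) ->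
  (* (ii) *)
  1 <= Lx ->
  (forall y x v gx, M x -> tangent M x v ->
     is_rgrad M (fun x' => f x' y) x gx ->
     f (Retr x v) y <= f x y + dot gx v + Lx / 2 * enorm v ^+ 2) ->
  (* (iii) *)
  0 <= Lxy ->
  (forall x1 x2 y g1 g2, M x1 -> M x2 ->
     is_rgrad setT (f x1) y g1 -> is_rgrad setT (f x2) y g2 ->
     enorm (g1 - g2) <= Lxy * enorm (x1 - x2)) ->
  (* (iv) (retraction part) *)
  0 < L1 ->
  (forall x v, M x -> tangent M x v -> enorm (Retr x v - x) <= L1 * enorm v) ->
  forall (z eta g : 'rV[R]_(d + n)),
    prodM M z -> tangent (prodM M) z eta ->
    is_rgrad (prodM M) (fbar f) z g ->
    fbar f (retrM' Retr z eta) <=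
      fbar f z + dot g eta + (Lxy * L1 + Num.max Lx Ly) / 2 * enorm eta ^+ 2.
Proof.
move=> Hex Hret Ly0 HLy Lx1 HLx Lxy0 HLxy L10 HL1 z eta g Mz Teta Hg.
have Ta : tangent M (lsubmx z) (lsubmx eta) := @tangent_l R d n M _ _ Teta.
have [Mx' _] := Hret _ _ Mz Ta.
have Hgx := @rgrad_x R d n M f _ _ Hg.
have Hgy := @rgrad_y R d n M f _ _ Hg.
have H2 := HLx _ _ _ _ Mz Ta Hgx.
have Gex : forall w, exists G, is_rgrad setT (f (Retr (lsubmx z) (lsubmx eta))) w G.
  move=> w.
  have Pz : prodM M (row_mx (Retr (lsubmx z) (lsubmx eta)) w) by rewrite /prodM /= row_mxKl.
  have [g' Hg'] := Hex _ Pz.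
  have := @rgrad_y R d n M f _ _ Hg'; rewrite row_mxKl row_mxKr => H; exists (rsubmx g'); exact: H.
have [G0 HG0] := Gex (rsubmx z).
have Hd := @descent_y R n (f (Retr (lsubmx z) (lsubmx eta))) Ly (rsubmx z) (rsubmx eta) G0
  Ly0 Gex (fun y1 y2 g1 g2 => HLy _ y1 y2 g1 g2 Mx') HG0.
have Hc := HLxy _ _ _ _ _ Mx' Mz HG0 Hgy.
have HR := HL1 _ _ Mz Ta.
have CS := @cauchy_schwarz R _ (G0 - rsubmx g) (rsubmx eta); rewrite dotBl in CS.
rewrite /fbar /retrM' row_mxKl row_mxKr dot_split.
have -> : enorm eta ^+ 2 = enorm (lsubmx eta) ^+ 2 + enorm (rsubmx eta) ^+ 2.
  by rewrite !enorm_sq -dot_split.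
set A := enorm (lsubmx eta) in H2 HR *.
set B := enorm (rsubmx eta) in Hd CS *.
have A0 : 0 <= A by apply: enorm_ge0.
have B0 : 0 <= B by apply: enorm_ge0.
have E1 : enorm (G0 - rsubmx g) * B <= Lxy * L1 * A * B.
  apply: ler_wpM2r => //; apply: (le_trans Hc).
  by rewrite -mulrA; apply: ler_wpM2l.
have E2 : Lxy * L1 * A * B <= Lxy * L1 / 2 * (A ^+ 2 + B ^+ 2).
  have : 0 <= Lxy * L1 by apply: mulr_ge0 => //; apply: ltW.
  have : 0 <= (A - B) ^+ 2 by apply: sqr_ge0.
  nra.
set m := Num.max Lx Ly.
have mx : Lx <= m by rewrite le_max lexx.
have my : Ly <= m by rewrite le_max lexx orbT.
have E3 : Lx / 2 * A ^+ 2 <= m / 2 * A ^+ 2.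
  by apply: ler_wpM2r; [apply: sqr_ge0 | apply: ler_wpM2r].
have E4 : Ly / 2 * B ^+ 2 <= m / 2 * B ^+ 2.
  by apply: ler_wpM2r; [apply: sqr_ge0 | apply: ler_wpM2r].
lra.
Qed.
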